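(* Let $\Theta$ be a finite set, $b$ a belief function on $\Theta$ with mass function $m_b$, and $\emptyset \subsetneq A \subseteq \Theta$. The set of $L_1$ conditional belief functions of $b$ with respect to $A$ in the mass space (the minimizers of $\|\vec{m}_b - \vec{m}_a\|_{L_1}$ over $\vec{m}_a \in \mathcal{M}_A$) is the simplex \[ \mathcal{M}_{L_1,A}[b] = Cl\big(\vec{m}[b]|_{L_1}^B A,\ \emptyset \subsetneq B \subseteq A\big), \] where, for each $\emptyset\subsetneq B\subseteq A$, the vertex $\vec{m}[b]|_{L_1}^B A$ is the mass vector $\vec{m}_a\in\mathcal{M}_A$ with \[ m_a(B) = m_b(B) + 1 - b(A) = m_b(B) + pl_b(A^c), \qquad m_a(X) = m_b(X)\ \ \forall\, \emptyset \subsetneq X \subsetneq A,\ X \neq B. \]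
   Context: A mass function on a finite set $\Theta$ is $m:2^\Theta\to[0,1]$ with $m(\emptyset)=0$ and $\sum_{A\subseteq\Theta} m(A)=1$; the associated belief function is $b(A)=\sum_{B\subseteq A} m_b(B)$ and plausibility $pl_b(A)=1-b(A^c)$. The mass vector of $b$ is $\vec{m}_b=[m_b(B)]_{\emptyset\subsetneq B\subseteq\Theta}\in\mathbb{R}^{2^{|\Theta|}-1}$. For $\emptyset\subsetneq A\subseteq\Theta$, $\mathcal{M}_A$ is the set of mass vectors of belief functions all of whose focal elements (subsets of nonzero mass) are subsets of $A$; in particular such vectors have zero coordinates outside subsets of $A$ and coordinates over subsets of $A$ summing to $1$. $Cl(\cdot)$ denotes convex hull. The $L_1$ distance is $\|\vec{m}_b-\vec{m}_{b'}\|_{L_1}=\sum_{\emptyset\subsetneq B\subseteq\Theta}|m_b(B)-m_{b'}(B)|$. *)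

(* Defs.v *)
From HB Require Import structures.
From mathcomp Require Import all_boot all_order all_algebra.
From mathcomp Require Import reals.
Set Implicit Arguments. Unset Strict Implicit. Unset Printing Implicit Defensive.
Import Order.TTheory GRing.Theory Num.Theory.
Local Open Scope ring_scope.

(* A mass vector is represented as a function
   {set T} -> R; its value at set0 is 0 by convention (the vector proper is
   indexed by nonempty subsets only). *)

Section Defs.
Variables (R : realType) (T : finType).

Definition is_mass (m : {set T} -> R) : Prop :=
  [/\ m set0 = 0, (forall B : {set T}, 0 <= m B) & \sum_(B : {set T}) m B = 1].

Definition bel (m : {set T} -> R) (A : {set T}) : R :=
  \sum_(B : {set T} | B \subset A) m B.

Definition pl (m : {set T} -> R) (A : {set T}) : R := 1 - bel m (~: A).

Definition in_MA (A : {set T}) (m : {set T} -> R) : Prop :=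
  is_mass m /\ (forall B : {set T}, ~~ (B \subset A) -> m B = 0).

Definition L1dist (m m' : {set T} -> R) : R :=
  \sum_(B : {set T} | B != set0) `|m B - m' B|.

Definition L1vertex (mb : {set T} -> R) (A B : {set T}) (X : {set T}) : R :=
  if (X == set0) || ~~ (X \subset A) then 0
  else if X == B then mb B + 1 - bel mb A
  else mb X.

Definition in_L1_simplex (mb : {set T} -> R) (A : {set T})
    (m : {set T} -> R) : Prop :=
  exists w : {set T} -> R,
    [/\ (forall B : {set T}, 0 <= w B),
        \sum_(B : {set T} | (B != set0) && (B \subset A)) w B = 1 &
        forall X, m X = \sum_(B : {set T} | (B != set0) && (B \subset A))
                          w B * L1vertex mb A B X].

End Defs.

(* Main.v *)
Require Import Defs.
From HB Require Import structures.
From mathcomp Require Import all_boot all_order all_algebra.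
From mathcomp Require Import reals.
From mathcomp Require Import lra.
Import Order.TTheory GRing.Theory Num.Theory.
Local Open Scope ring_scope.

Section Aux.
Variables (R : realType) (T : finType) (mb : {set T} -> R) (A : {set T}).
Hypothesis hmb : is_mass mb.

Let S := fun B : {set T} => (B != set0) && (B \subset A).

Lemma bel_S : bel mb A = \sum_(B | S B) mb B.
Proof.
case: hmb => h0 _ _.
rewrite /bel (bigD1 set0) ?sub0set //= h0 add0r.
by apply: eq_bigl => B; rewrite /S andbC.
Qed.

Lemma bel_le1 : bel mb A <= 1.
Proof.
case: hmb => _ hp hs.
rewrite -hs (bigID (fun B : {set T} => B \subset A)) /= -[X in X <= _]addr0 lerD2l.
by apply: sumr_ge0 => B _.
Qed.

Lemma sumS_MA (ma : {set T} -> R) : in_MA A ma -> \sum_(B | S B) ma B = 1.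
Proof.
case=> [[h0 hp hs] hz].
rewrite -hs [RHS](bigID (fun B : {set T} => B \subset A)) /= [X in _ = _ + X]big1; last first.
  by move=> B /hz.
rewrite addr0 [RHS](bigD1 set0) ?sub0set //= h0 add0r.
by apply: eq_bigl => B; rewrite /S andbC.
Qed.

Definition Kc := \sum_(B | (B != set0) && ~~ (B \subset A)) mb B.

Lemma L1_decomp (ma : {set T} -> R) : in_MA A ma ->
  L1dist mb ma = Kc + (1 - bel mb A) +
     \sum_(B | S B) (`|mb B - ma B| - (ma B - mb B)).
Proof.
move=> hma; have hs := sumS_MA _ hma; case: hma => _ hz.
rewrite /L1dist (bigID (fun B : {set T} => B \subset A)) /= addrC.
have -> : \sum_(i | (i != set0) && ~~ (i \subset A)) `|mb i - ma i| = Kc.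
  rewrite /Kc; apply: eq_bigr => B /andP[_ /hz ->]; rewrite subr0 ger0_norm //.
  by case: hmb.
rewrite -addrA; congr (_ + _).
rewrite sumrB sumrB hs bel_S /S; lra.
Qed.

Lemma simplex_eq (w : {set T} -> R) X :
  \sum_(B | S B) w B = 1 ->
  \sum_(B | S B) w B * L1vertex mb A B X =
     if S X then mb X + w X * (1 - bel mb A) else 0.
Proof.
move=> hw; rewrite /L1vertex.
case hX: (S X); last first.
  by apply: big1 => B _; move: hX; rewrite /S; case: (X == set0) => //=; case: (X \subset A) => //= _; rewrite mulr0.
move: (hX); rewrite /S => /andP[/negbTE -> ->] /=.
rewrite (bigD1 X) //= eqxx.
rewrite (eq_bigr (fun B => w B * mb X)); last first.
  by move=> B /andP[_ hB]; rewrite eq_sym (negbTE hB).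
rewrite -mulr_suml.
have : \sum_(B | S B && (B != X)) w B = 1 - w X.
  by rewrite -hw [X in _ = X - _](bigD1 X) //=; lra.
move=> ->; lra.
Qed.

Lemma simplex_MA (ma : {set T} -> R) : in_L1_simplex mb A ma ->
  in_MA A ma /\ (forall B, S B -> mb B <= ma B).
Proof.
case=> w [hw0 hw1 hm].
have hc : 0 <= 1 - bel mb A by have := bel_le1; lra.
have hf X : ma X = if S X then mb X + w X * (1 - bel mb A) else 0.
  by rewrite hm simplex_eq.
case: (hmb) => h0 hp hs.
split; last first.
  by move=> B hB; rewrite hf hB ler_wpDr // mulr_ge0.
split; last by move=> B hB; rewrite hf /S (negbTE hB) andbF.
split.
- by rewrite hf /S eqxx.
- by move=> B; rewrite hf; case: ifP => // _; rewrite addr_ge0 // mulr_ge0.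
- rewrite (eq_bigr _ (fun X _ => hf X)) -big_mkcond /= big_split /= -mulr_suml hw1.
  rewrite -bel_S; lra.
Qed.

End Aux.
Arguments bel_le1 {R T mb} A hmb.
Arguments bel_S {R T mb} A hmb.
Arguments sumS_MA {R T A ma} _.
Arguments L1_decomp {R T mb A} hmb {ma} _.
Arguments simplex_eq {R T mb A} w X _.
Arguments simplex_MA {R T mb A} hmb {ma} _.

Theorem theorem2 (R : realType) (T : finType) (mb : {set T} -> R)
    (A : {set T}) :
  is_mass mb -> A != set0 ->
  forall ma : {set T} -> R,
    (in_MA A ma /\ (forall ma', in_MA A ma' -> L1dist mb ma <= L1dist mb ma'))
    <-> in_L1_simplex mb A ma.
Proof.
move=> hmb hA ma.
set S := fun B : {set T} => (B != set0) && (B \subset A).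
have hSA : S A by rewrite /S hA subxx.
have hc : 0 <= 1 - bel mb A by have := bel_le1 A hmb; lra.
split; last first.
  move=> hsim; have [hma hge] := simplex_MA hmb hsim.
  split => // ma' hma'.
  rewrite (L1_decomp hmb hma) (L1_decomp hmb hma').
  rewrite lerD2l big1; last first.
    by move=> B hB; have h := hge B hB; rewrite ler0_norm; lra.
  by apply: sumr_ge0 => B _; rewrite distrC subr_ge0 ler_norm.
case=> hma hmin.
have hv : in_MA A (L1vertex mb A A).
  apply: (proj1 (simplex_MA hmb _)).
  exists (fun B => (B == A)%:R); split.
  - by move=> B; rewrite ler0n.
  - rewrite (bigD1 A) //= eqxx big1 ?addr0 // => B /andP[_ /negbTE ->] //.
  - move=> X; rewrite (bigD1 A) //= eqxx mul1r big1 ?addr0 // => B /andP[_ /negbTE ->].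
    by rewrite mul0r.
have := hmin _ hv.
rewrite (L1_decomp hmb hma) (L1_decomp hmb hv) lerD2l.
have -> : \sum_(B | S B) (`|mb B - L1vertex mb A A B| - (L1vertex mb A A B - mb B)) = 0.
  apply: big1 => B /andP[hB0 hBA]; rewrite /L1vertex (negbTE hB0) hBA /=.
  case: ifP => [/eqP -> | _]; last by rewrite subrr normr0 subr0.
  rewrite ler0_norm; first lra.
  have := bel_le1 A hmb; lra.
move=> hle.
have hge0 B : S B -> 0 <= `|mb B - ma B| - (ma B - mb B).
  by move=> _; rewrite distrC subr_ge0 ler_norm.
have hz : forall B, S B -> `|mb B - ma B| - (ma B - mb B) = 0.
  apply/psumr_eq0P => //; apply/eqP; rewrite eq_le hle /=.
  by apply: sumr_ge0.
have hge B : S B -> mb B <= ma B.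
  move=> hB; have := hz B hB; have := normr_ge0 (mb B - ma B); lra.
have hsum : \sum_(B | S B) (ma B - mb B) = 1 - bel mb A.
  by rewrite sumrB (sumS_MA hma) (bel_S A hmb).
case: hma => [[h0 hp hs] hsupp].
have hout X : ~~ S X -> ma X = 0.
  rewrite /S negb_and negbK => /orP[/eqP -> // | /hsupp //].
have [c0|cn0] := eqVneq (1 - bel mb A) 0.
  have hd : forall B, S B -> ma B - mb B = 0.
    apply/psumr_eq0P; first by move=> B /hge; rewrite subr_ge0.
    by rewrite hsum c0.
  exists (fun B => (B == A)%:R); split.
  - by move=> B; rewrite ler0n.
  - rewrite (bigD1 A) //= eqxx big1 ?addr0 // => B /andP[_ /negbTE ->] //.
  - move=> X; rewrite simplex_eq -/(S X) //; last first.
      rewrite (bigD1 A) //= eqxx big1 ?addr0 // => B /andP[_ /negbTE ->] //.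
    rewrite c0 mulr0 addr0.
    case hX: (S X); last by rewrite hout ?hX.
    by have := hd X hX; lra.
pose w := fun B => if S B then (ma B - mb B) / (1 - bel mb A) else 0.
have hw1 : \sum_(B | S B) w B = 1.
  rewrite (eq_bigr (fun B => (ma B - mb B) / (1 - bel mb A))); last first.
    by move=> B hB; rewrite /w hB.
  by rewrite -mulr_suml hsum divff.
exists w; split => //.
- move=> B; rewrite /w; case: ifP => // hB.
  by rewrite divr_ge0 // subr_ge0 hge.
- move=> X; rewrite simplex_eq -/(S X) //.
  case hX: (S X); last by rewrite hout ?hX.
  by rewrite /w hX divfK //; lra.
Qed.
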